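(* Let $\alpha,\beta$ be real (or complex) parameters and let $n,k$ be non-negative integers. Let $\Omega_{n,k}$ be the set of all partitions of $\{1,\ldots,n\}$ into $k$ non-empty blocks, the blocks being unordered among themselves but each block being arranged as a linear list (sequence). For $\varepsilon\in\Omega_{n,k}$ define its weight $w(\varepsilon)$ as the product over all elements $e\in\{1,\ldots,n\}$ of the weight of $e$, where an element $e$ has weight $1$ if $e$ is the smallest element of its list, weight $\beta$ if $e$ is not the smallest element of its list but appears in the list before every element of its list that is smaller than $e$, and weight $\alpha$ otherwise. (Equivalently, the lists are built by inserting $1,2,\ldots,n$ one at a time: starting a new list costs $1$, inserting at the head of an existing list costs $\beta$, inserting immediately after an already placed element costs $\alpha$.) Then $$\genfrac{\lfloor}{\rfloor}{0pt}{}{n}{k}^{\alpha,\beta}=\sum_{\varepsilon\in\Omega_{n,k}} w(\varepsilon).$$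
   Context: For parameters $\alpha,\beta$, the generalized Stirling (Lah-type) numbers $\genfrac{\lfloor}{\rfloor}{0pt}{}{n}{k}^{\alpha,\beta}$, $0\le k\le n$, are defined by the polynomial identity in $x$ $$x(x+\alpha)(x+2\alpha)\cdots(x+(n-1)\alpha)=\sum_{k=0}^{n}\genfrac{\lfloor}{\rfloor}{0pt}{}{n}{k}^{\alpha,\beta}\,x(x-\beta)(x-2\beta)\cdots(x-(k-1)\beta),$$ (empty products equal $1$), and $\genfrac{\lfloor}{\rfloor}{0pt}{}{n}{k}^{\alpha,\beta}=0$ for $k<0$ or $k>n$. In particular $\genfrac{\lfloor}{\rfloor}{0pt}{}{0}{0}^{\alpha,\beta}=1$ and $\genfrac{\lfloor}{\rfloor}{0pt}{}{n}{0}^{\alpha,\beta}=0$ for $n\ge1$. *)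

(* Defs.v *)
From HB Require Import structures.
From mathcomp Require Import all_boot all_order all_algebra.
Set Implicit Arguments. Unset Strict Implicit. Unset Printing Implicit Defensive.
Import Order.TTheory GRing.Theory Num.Theory.
Local Open Scope ring_scope.

Definition rise_poly (R : comRingType) (a : R) (n : nat) : {poly R} :=
  \prod_(i < n) ('X + (i%:R * a)%:P).

Definition fall_poly (R : comRingType) (b : R) (k : nat) : {poly R} :=
  \prod_(i < k) ('X - (i%:R * b)%:P).

Definition is_gstirling (R : comRingType) (a b : R) (n : nat) (c : nat -> R) : Prop :=
  rise_poly a n = \sum_(k < n.+1) c k *: fall_poly b k.

(* A partition of the ground set 'I_n (standing for {1..n}, order preserved)
   into blocks, each arranged as a linear list, is encoded by the strict
   "appears before, in the same list" relation  r : {set 'I_n * 'I_n}: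
   (e, f) \in r  iff  e and f lie in the same list and e comes before f.
   Such r are exactly the strict partial orders whose comparability relation
   is transitive (each block is a chain, i.e. linearly ordered). *)
Definition same_block (n : nat) (r : {set 'I_n * 'I_n}) (e f : 'I_n) : bool :=
  [|| e == f, (e, f) \in r | (f, e) \in r].

Definition is_list_partition (n : nat) (r : {set 'I_n * 'I_n}) : bool :=
  [&& [forall e : 'I_n, (e, e) \notin r],
      [forall e : 'I_n, forall f : 'I_n, forall g : 'I_n,
         ((e, f) \in r) && ((f, g) \in r) ==> ((e, g) \in r)] &
      [forall e : 'I_n, forall f : 'I_n, forall g : 'I_n,
         same_block r e f && same_block r f g ==> same_block r e g]].

Definition blocks (n : nat) (r : {set 'I_n * 'I_n}) : {set {set 'I_n}} :=
  [set [set f | same_block r e f] | e : 'I_n].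

Definition Omega (n k : nat) : {set {set 'I_n * 'I_n}} :=
  [set r | is_list_partition r && (#|blocks r| == k)].

Definition elt_weight (R : comRingType) (a b : R) (n : nat)
    (r : {set 'I_n * 'I_n}) (e : 'I_n) : R :=
  if [forall f : 'I_n, same_block r e f ==> (e <= f)%N] then 1
  else if [forall f : 'I_n, (same_block r e f && (f < e)%N) ==> ((e, f) \in r)]
  then b else a.

Definition weight (R : comRingType) (a b : R) (n : nat) (r : {set 'I_n * 'I_n}) : R :=
  \prod_(e : 'I_n) elt_weight a b r e.

Definition weight_sum (R : comRingType) (a b : R) (n k : nat) : R :=
  \sum_(r in Omega n k) weight a b r.

(* Main.v *)
Require Import Defs.
From HB Require Import structures.
From mathcomp Require Import all_boot all_order all_algebra.
Import Order.TTheory GRing.Theory Num.Theory.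
Local Open Scope ring_scope.

Set Implicit Arguments. Unset Strict Implicit. Unset Printing Implicit Defensive.

Lemma LPP m (r : {set 'I_m * 'I_m}) : is_list_partition r <->
  [/\ forall e, (e,e) \notin r,
      forall e f g, (e,f) \in r -> (f,g) \in r -> (e,g) \in r &
      forall e f g, same_block r e f -> same_block r f g -> same_block r e g].
Proof.
rewrite /is_list_partition; split.
- case/and3P => /forallP H1 /forallP H2 /forallP H3; split.
  + exact H1.
  + move=> e f g ef fg; move/forallP: (H2 e) => /(_ f) /forallP /(_ g).
    by rewrite ef fg.
  + move=> e f g ef fg; move/forallP: (H3 e) => /(_ f) /forallP /(_ g).
    by rewrite ef fg.
- case=> H1 H2 H3; apply/and3P; split; apply/forallP=> e //;
  apply/forallP=> f; apply/forallP=> g; apply/implyP => /andP [].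
  + exact: H2.
  + exact: H3.
Qed.

Lemma sbC m (r : {set 'I_m * 'I_m}) e f : same_block r e f = same_block r f e.
Proof. by rewrite /same_block eq_sym; case: (_ \in r); case: (_ \in r); rewrite ?orbT ?orbF. Qed.

Lemma sb_refl m (r : {set 'I_m * 'I_m}) e : same_block r e e.
Proof. by rewrite /same_block eqxx. Qed.

Definition heads m (r : {set 'I_m * 'I_m}) : {set 'I_m} :=
  [set e | [forall f, (f, e) \notin r]].
Definition pre m (r : {set 'I_m * 'I_m}) e : {set 'I_m} := [set f | (f, e) \in r].
Definition suc m (r : {set 'I_m * 'I_m}) e : {set 'I_m} := [set f | (e, f) \in r].

Lemma headsP m (r : {set 'I_m * 'I_m}) h : reflect (forall f, (f,h) \notin r) (h \in heads r).
Proof. by rewrite inE; apply: forallP. Qed.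

Lemma pre_lt m (r : {set 'I_m * 'I_m}) g h : is_list_partition r -> (g, h) \in r ->
  (#|pre r g| < #|pre r h|)%N.
Proof.
case/LPP=> H1 H2 _ gh; apply: proper_card; apply/properP; split.
- by apply/subsetP=> x; rewrite !inE => xg; apply: H2 gh.
- by exists g; rewrite !inE.
Qed.

Lemma exists_head m (r : {set 'I_m * 'I_m}) e : is_list_partition r ->
  exists2 h, h \in heads r & same_block r e h.
Proof.
move=> LP; case: (@arg_minnP _ e (same_block r e) (fun f => #|pre r f|) (sb_refl r e)).
move=> h eh hmin; exists h => //; apply/headsP => g; apply/negP => gh.
have := pre_lt LP gh; rewrite ltnNge hmin //.
case/LPP: LP => _ _ H3; apply: H3 eh _.
by rewrite /same_block gh !orbT.
Qed.

Lemma blocks_heads m (r : {set 'I_m * 'I_m}) : is_list_partition r ->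
  #|blocks r| = #|heads r|.
Proof.
move=> LP; have LP' := LP; case/LPP: LP' => H1 H2 H3.
have -> : blocks r = [set [set f | same_block r e f] | e in heads r].
  apply/setP => B; apply/imsetP/imsetP => [[e _ ->]|[e _ ->]]; last by exists e.
  case: (exists_head e LP) => h hH eh; exists h => //.
  apply/setP => f; rewrite !inE; apply/idP/idP => Hf.
  + by apply: H3 Hf; rewrite sbC.
  + exact: H3 eh Hf.
apply: card_in_imset => h1 h2 /headsP hh1 /headsP hh2 E.
have : h2 \in [set f | same_block r h1 f] by rewrite E inE sb_refl.
rewrite inE /same_block; case/or3P => [/eqP //| /(negP (hh2 _)) | /(negP (hh1 _))] //.
Qed.

Section Ext.
Variable n : nat.
Local Notation mx := (@ord_max n).
Definition lf (i : 'I_n) : 'I_n.+1 := lift ord_max i.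

Definition ext (r : {set 'I_n * 'I_n}) (P S : {set 'I_n}) : {set 'I_n.+1 * 'I_n.+1} :=
  [set p | match unlift ord_max p.1, unlift ord_max p.2 with
   | Some i, Some j => (i,j) \in r | Some i, None => i \in P
   | None, Some j => j \in S | None, None => false end].

Variables (r : {set 'I_n * 'I_n}) (P S : {set 'I_n}).

Lemma ext_ll i j : ((lf i, lf j) \in ext r P S) = ((i,j) \in r).
Proof. by rewrite inE /= /lf !liftK. Qed.
Lemma ext_lm i : ((lf i, mx) \in ext r P S) = (i \in P).
Proof. by rewrite inE /= /lf liftK unlift_none. Qed.
Lemma ext_ml j : ((mx, lf j) \in ext r P S) = (j \in S).
Proof. by rewrite inE /= /lf liftK unlift_none. Qed.
Lemma ext_mm : ((mx, mx) \in ext r P S) = false.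
Proof. by rewrite inE /= unlift_none. Qed.

Lemma lf_eq i j : (lf i == lf j) = (i == j).
Proof. by apply/eqP/eqP => [/lift_inj|->]. Qed.
Lemma lf_mx i : (lf i == mx) = false.
Proof. by rewrite eq_sym; apply/negbTE/neq_lift. Qed.

Lemma sb_ll i j : same_block (ext r P S) (lf i) (lf j) = same_block r i j.
Proof. by rewrite /same_block lf_eq !ext_ll. Qed.
Lemma sb_lm i : same_block (ext r P S) (lf i) mx = (i \in P) || (i \in S).
Proof. by rewrite /same_block lf_mx ext_lm ext_ml. Qed.
Lemma sb_ml i : same_block (ext r P S) mx (lf i) = (i \in P) || (i \in S).
Proof. by rewrite sbC sb_lm. Qed.
Lemma sb_mm : same_block (ext r P S) mx mx.
Proof. exact: sb_refl. Qed.

Definition extE := (ext_ll, ext_lm, ext_ml, ext_mm, sb_ll, sb_lm, sb_ml, sb_mm).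

Definition Cond : Prop :=
 [/\ forall i j, i \in P -> j \in S -> (i,j) \in r,
     forall i j, (i,j) \in r -> j \in P -> i \in P,
     forall i j, (i,j) \in r -> i \in S -> j \in S,
     forall i j, (i \in P) || (i \in S) -> (j \in P) || (j \in S) -> same_block r i j &
     forall i j, (i \in P) || (i \in S) -> same_block r i j -> (j \in P) || (j \in S)].

Lemma ext_LP : is_list_partition r -> Cond -> is_list_partition (ext r P S).
Proof.
case/LPP=> H1 H2 H3 [C1 C2 C3 C4 C5]; apply/LPP; split.
- by move=> e; case: (unliftP mx e) => [e'|] ->; rewrite ?extE ?H1.
- move=> e f g; case: (unliftP mx e) => [e'|] ->; case: (unliftP mx f) => [f'|] ->;
  case: (unliftP mx g) => [g'|] ->; rewrite ?extE //; move=> A B.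
  all: try first [exact: H2 A B | exact: C2 A B | exact: C1 A B | exact: C3 B A
             | by have := H1 f'; rewrite (C1 _ _ B A)].
- move=> e f g; case: (unliftP mx e) => [e'|] ->; case: (unliftP mx f) => [f'|] ->;
  case: (unliftP mx g) => [g'|] ->; rewrite ?extE //; move=> A B.
  all: try first [exact: H3 A B | exact: C4 A B | exact: C5 A B | exact: C5 B A
             | by apply: C5 B _; rewrite sbC | done].
Qed.

Lemma ext_LP_inv : is_list_partition (ext r P S) -> is_list_partition r /\ Cond.
Proof.
case/LPP=> H1 H2 H3; split; first (apply/LPP; split).
- by move=> e; have := H1 (lf e); rewrite extE.
- by move=> e f g ef fg; have := H2 (lf e) (lf f) (lf g); rewrite !extE; apply.
- by move=> e f g ef fg; have := H3 (lf e) (lf f) (lf g); rewrite !extE; apply.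
split.
- by move=> i j iP jS; have := H2 (lf i) mx (lf j); rewrite !extE; apply.
- by move=> i j ij jP; have := H2 (lf i) (lf j) mx; rewrite !extE; apply.
- by move=> i j ij iS; have := H2 mx (lf i) (lf j); rewrite !extE; apply.
- by move=> i j iPS jPS; have := H3 (lf i) mx (lf j); rewrite !extE; apply.
- by move=> i j iPS ij; have := H3 mx (lf i) (lf j); rewrite !extE; apply.
Qed.

End Ext.

Section Ext2.
Variable n : nat.
Local Notation mx := (@ord_max n).

Lemma val_lf (i : 'I_n) : (lf i : nat) = i.
Proof. by rewrite /lf /= /bump leqNgt ltn_ord. Qed.

Lemma bump_n (j : 'I_n) : bump n j = j.
Proof. by rewrite /bump leqNgt ltn_ord. Qed.

Lemma widen_lf (i : 'I_n) : widen_ord (leqnSn n) i = lf i.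
Proof. by apply: ord_inj; rewrite val_lf. Qed.

Lemma forall_split (p : pred 'I_n.+1) :
  [forall x, p x] = [forall i, p (lf i)] && p mx.
Proof.
apply/forallP/andP => [H|[/forallP H1 H2] x]; first by split; [apply/forallP=> i|]; apply: H.
by case: (unliftP mx x) => [x'|] ->; [apply: H1|].
Qed.

Lemma card_split (A : {set 'I_n.+1}) :
  #|A| = (#|[set i | lf i \in A]| + (mx \in A))%N.
Proof.
rewrite -!sum1_card big_mkcond big_ord_recr /= [in RHS]big_mkcond /=.
rewrite (_ : (if mx \in A then 1 else 0) = (mx \in A) :> nat); last by case: (_ \in A).
f_equal; apply: eq_bigr => i _; by rewrite inE widen_lf.
Qed.

Variables (R : comRingType) (a b : R) (r : {set 'I_n * 'I_n}) (P S : {set 'I_n}).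

Lemma ew_lf i : elt_weight a b (ext r P S) (lf i) = elt_weight a b r i.
Proof.
rewrite /elt_weight !forall_split !extE !val_lf (leq_trans (ltnW (ltn_ord i))) // implybT andbT.
rewrite [(mx < _)%N]ltnNge (ltnW (ltn_ord i)) andbF implyFb andbT.
rewrite (@eq_forallb _ _ (fun j => same_block r i j ==> (i <= j)%N)); last first.
  by move=> j /=; rewrite !extE ?bump_n ?val_lf.
rewrite (@eq_forallb _ (fun j => same_block (ext r P S) (lf i) (lf j) && (lf j < i)%N ==> ((lf i, lf j) \in ext r P S)) (fun j => same_block r i j && (j < i)%N ==> ((i, j) \in r))) //.
by move=> j /=; rewrite !extE ?bump_n ?val_lf.
Qed.

Lemma set0_forall (A : {set 'I_n}) : (A == set0) = [forall i, i \notin A].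
Proof.
apply/eqP/forallP => [-> i|H]; first by rewrite inE.
by apply/setP => i; rewrite inE; apply/negbTE/H.
Qed.

Lemma ew_mx : is_list_partition r -> Cond r P S ->
  elt_weight a b (ext r P S) mx =
  if (P == set0) && (S == set0) then 1 else if P == set0 then b else a.
Proof.
move=> /LPP [H1 _ _] [C1 _ _ _ _].
rewrite /elt_weight !forall_split !extE ltnn leqnn andbT /= andbT.
rewrite (@eq_forallb _ _ (fun i => ~~ ((i \in P) || (i \in S)))); last first.
  by move=> i /=; rewrite !extE ?bump_n ?val_lf /= leqNgt ltn_ord implybF.
have -> : [forall i, ~~ ((i \in P) || (i \in S))] = (P == set0) && (S == set0).
  rewrite !set0_forall; apply/forallP/andP => [H|[/forallP H2 /forallP H3] i].
    by split; apply/forallP => i; move: (H i); rewrite negb_or => /andP[].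
  by rewrite negb_or H2 H3.
case: ifP => // _.
rewrite (@eq_forallb _ _ (fun i => (i \in P) ==> (i \in S))); last first.
  move=> i /=; rewrite !extE ?bump_n ?val_lf /= ltn_ord andbT.
  by case: (i \in P); case: (i \in S).
have -> : [forall i, (i \in P) ==> (i \in S)] = (P == set0) => //.
rewrite set0_forall; apply/forallP/forallP => H i.
  apply/negP => iP; have := H i; rewrite iP /= => iS.
  by have := H1 i; rewrite (C1 _ _ iP iS).
by move: (H i); case: (i \in P).
Qed.

Lemma weight_ext : weight a b (ext r P S) = weight a b r * elt_weight a b (ext r P S) mx.
Proof.
rewrite /weight big_ord_recr /=; congr (_ * _).
by apply: eq_bigr => i _; rewrite widen_lf ew_lf.
Qed.

Lemma heads_ext : #|heads (ext r P S)| = (#|heads r :\: S| + (P == set0))%N.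
Proof.
have E : [set i | lf i \in heads (ext r P S)] = heads r :\: S.
  apply/setP => i; rewrite !inE forall_split !extE [RHS]andbC; congr (_ && _).
  by apply: eq_forallb => j; rewrite extE.
rewrite card_split E; congr (_ + _)%N.
rewrite inE forall_split !extE set0_forall /= andbT.
by rewrite (@eq_forallb _ _ (fun i => i \notin P)) // => j /=; rewrite extE.
Qed.

End Ext2.

Section Fiber.
Variable n : nat.
Variable r : {set 'I_n * 'I_n}.
Hypothesis LP : is_list_partition r.

Definition c0 : {set 'I_n} * {set 'I_n} := (set0, set0).
Definition ca m : {set 'I_n} * {set 'I_n} := (m |: pre r m, suc r m).
Definition cb h : {set 'I_n} * {set 'I_n} := (set0, h |: suc r h).

Lemma cond_center (P S : {set 'I_n}) c :
  (forall i, (i \in P) || (i \in S) = same_block r c i) ->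
  (forall i j, (i \in P) || (i \in S) -> (j \in P) || (j \in S) -> same_block r i j) /\
  (forall i j, (i \in P) || (i \in S) -> same_block r i j -> (j \in P) || (j \in S)).
Proof.
case/LPP: LP => _ _ H3 E; split => i j; rewrite !E.
- by move=> ci cj; apply: H3 cj; rewrite sbC.
- by move=> ci ij; apply: H3 ci ij.
Qed.

Lemma cond_c0 : Cond r set0 set0.
Proof. by split=> i j; rewrite ?inE. Qed.

Lemma cond_ca m : Cond r (ca m).1 (ca m).2.
Proof.
have LP' := LP; case/LPP: LP' => H1 H2 H3.
have E : forall i, (i \in (ca m).1) || (i \in (ca m).2) = same_block r m i.
  move=> i; rewrite /= !inE /same_block eq_sym.
  by case: (m == i); case: ((i, m) \in r); case: ((m, i) \in r).
have [C4 C5] := cond_center E.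
split; [| | | exact: C4 | exact: C5]; move=> i j; rewrite /= !inE.
- case/predU1P => [->|im] mj //; exact: H2 im mj.
- move=> ij /predU1P [Ej|jm]; first by rewrite -Ej ij orbT.
  by rewrite (H2 _ _ _ ij jm) orbT.
- by move=> ij mi; apply: H2 mi ij.
Qed.

Lemma cond_cb h : h \in heads r -> Cond r (cb h).1 (cb h).2.
Proof.
move=> /headsP hh; have LP' := LP; case/LPP: LP' => H1 H2 H3.
have E : forall i, (i \in (cb h).1) || (i \in (cb h).2) = same_block r h i.
  by move=> i; rewrite /= !inE /same_block eq_sym (negbTE (hh i)) orbF.
have [C4 C5] := cond_center E.
split; [by move=> i j; rewrite inE | by move=> i j _; rewrite inE | | exact: C4 | exact: C5]; move=> i j; rewrite /= !inE.
move=> ij /predU1P [Ej|hi]; first by rewrite -Ej ij orbT.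
by rewrite (H2 _ _ _ hi ij) orbT.
Qed.

Lemma cond_cases P S : Cond r P S ->
  [\/ (P, S) = c0, exists m, (P, S) = ca m | exists2 h, h \in heads r & (P, S) = cb h].
Proof.
have LP' := LP; case/LPP: LP' => H1 H2 H3 [C1 C2 C3 C4 C5].
case: (set_0Vmem P) => [P0|[m0 m0P]].
  case: (set_0Vmem S) => [S0|[h0 h0S]]; first by constructor 1; rewrite P0 S0.
  constructor 3.
  have h0S' : h0 \in S by [].
  case: (@arg_minnP _ h0 (mem S) (fun f => #|pre r f|) h0S') => h hS0 hmin.
  have hS : h \in S := hS0.
  have Sh : forall i, i \in S -> (i, h) \notin r.
    move=> i iS; apply/negP => ih; have := pre_lt LP ih.
    by rewrite ltnNge hmin.
  have hH : h \in heads r.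
    apply/headsP => g; apply/negP => gh.
    have : (g \in P) || (g \in S).
      apply: (C5 h g); [by rewrite hS orbT | by rewrite /same_block gh !orbT].
    by rewrite P0 inE /= => /Sh; rewrite gh.
  exists h => //; rewrite /cb P0; congr (_, _).
  apply/setP => i; rewrite !inE; apply/idP/idP.
    move=> iS; have := C4 h i; rewrite hS iS !orbT /same_block eq_sym => /(_ isT isT).
    by rewrite (negbTE (Sh i iS)) orbF.
  by case/predU1P => [->|hi] //; apply: C3 hi hS.
constructor 2.
case: (@arg_maxnP _ m0 (mem P) (fun f => #|pre r f|) m0P) => m mP0 mmax.
have mP : m \in P := mP0.
have Pm : forall i, i \in P -> (m, i) \notin r.
  move=> i iP; apply/negP => mi; have := pre_lt LP mi.
  by move: (mmax i iP) => /= Hm; rewrite ltnNge Hm.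
have Pm' : forall i, i \in P -> (i == m) || ((i, m) \in r).
  move=> i iP; have := C4 m i; rewrite mP iP /= => /(_ isT isT).
  by rewrite /same_block eq_sym (negbTE (Pm i iP)).
exists m; rewrite /ca; congr (_, _).
  apply/setP => i; rewrite !inE; apply/idP/idP; first exact: Pm'.
  by case/predU1P => [->|im] //; apply: C2 im mP.
apply/setP => j; rewrite !inE; apply/idP/idP; first exact: C1.
move=> mj; have : (j \in P) || (j \in S).
  by apply: (C5 m j); rewrite ?mP // /same_block mj orbT.
case/orP => // jP; case/orP: (Pm' j jP) => [/eqP E | jm].
  by have := H1 m; rewrite -{2}E mj.
by have := H1 j; rewrite (H2 _ _ _ jm mj).
Qed.

End Fiber.

Section Fiber2.
Variable n : nat.
Variable r : {set 'I_n * 'I_n}.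
Hypothesis LP : is_list_partition r.

Lemma V_eq : [set ps : {set 'I_n} * {set 'I_n} | is_list_partition (ext r ps.1 ps.2)] =
  c0 n |: ([set ca r m | m : 'I_n] :|: [set cb r h | h in heads r]).
Proof.
apply/setP => [[P S]]; rewrite !inE /=; apply/idP/idP.
  case/ext_LP_inv => _ /(cond_cases LP) [->|[m ->]|[h hH ->]].
  - by rewrite eqxx.
  - by rewrite (imset_f (fun m => ca r m)) ?orbT.
  - by rewrite (imset_f (fun h => cb r h)) ?orbT.
case/or3P => [/eqP E|/imsetP [m _ E]|/imsetP [h hH E]];
  move: E; rewrite /c0 /ca /cb => -[-> ->]; apply: ext_LP => //.
- exact: cond_c0.
- exact: cond_ca.
- exact: cond_cb.
Qed.

Lemma setU1_neq0 (T : finType) (m : T) (A : {set T}) : (m |: A == set0) = false.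
Proof. by apply/negbTE/set0Pn; exists m; rewrite !inE eqxx. Qed.

Variables (R : comRingType) (a b : R) (k : nat).

Definition Fk (ps : {set 'I_n} * {set 'I_n}) : R :=
  if #|heads (ext r ps.1 ps.2)| == k then elt_weight a b (ext r ps.1 ps.2) ord_max else 0.

Lemma Fk_c0 : Fk (c0 n) = (#|heads r|.+1 == k)%:R.
Proof.
rewrite /Fk heads_ext /= setD0 eqxx addn1 ew_mx //; last exact: cond_c0.
by rewrite eqxx; case: (_ == k).
Qed.

Lemma Fk_ca m : Fk (ca r m) = (#|heads r| == k)%:R * a.
Proof.
rewrite /Fk heads_ext /= setU1_neq0 addn0 ew_mx //; last exact: cond_ca.
have -> : heads r :\: suc r m = heads r.
  apply/setP => h; rewrite in_setD andbC; case hH: (h \in heads r) => //=.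
  by rewrite inE; move/headsP: hH => /(_ m) ->.
by rewrite setU1_neq0 /=; case: (_ == k); rewrite ?mul1r ?mul0r.
Qed.

Lemma Fk_cb h : h \in heads r -> Fk (cb r h) = (#|heads r| == k)%:R * b.
Proof.
move=> hH; rewrite /Fk heads_ext /= eqxx addn1 ew_mx //; last exact: cond_cb.
have -> : heads r :\: (h |: suc r h) = heads r :\ h.
  apply/setP => g; rewrite !in_setD andbC [in RHS]andbC; case gH: (g \in heads r) => //=.
  by rewrite !inE; move/headsP: gH => /(_ h) /negbTE ->; rewrite orbF.
rewrite [in RHS](cardsD1 h (heads r)) hH add1n /= eqxx setU1_neq0 /=.
by case: (_ == k); rewrite ?mul1r ?mul0r.
Qed.

Lemma fiber_sum :
  \sum_(ps | is_list_partition (ext r ps.1 ps.2) && (#|heads (ext r ps.1 ps.2)| == k))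
     elt_weight a b (ext r ps.1 ps.2) ord_max =
  (#|heads r|.+1 == k)%:R + (#|heads r| == k)%:R * (a *+ n + b *+ #|heads r|).
Proof.
rewrite big_mkcondr /=.
rewrite (eq_bigl (fun ps => ps \in [set ps : {set 'I_n} * {set 'I_n} | is_list_partition (ext r ps.1 ps.2)])); last first.
  by move=> ps; rewrite inE.
rewrite V_eq big_setU1 /=; last first.
  rewrite !inE negb_or; apply/andP; split; apply/negP => /imsetP [x _ E];
  move: E; rewrite /c0 /ca /cb;
  move/(congr1 (fun p : {set 'I_n} * {set 'I_n} => (p.1 == set0) && (p.2 == set0))) => /=;
  by rewrite !eqxx !setU1_neq0 ?andbF.

rewrite -/(Fk (c0 n)) Fk_c0; congr (_ + _).
rewrite (eq_bigl [predU [set ca r m | m : 'I_n] & [set cb r h | h in heads r]]); last first.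
  by move=> x; rewrite !inE.
rewrite bigU /=; last first.
  rewrite -setI_eq0; apply/eqP/setP => x; rewrite !inE; apply/negbTE/negP.
  case/andP => /imsetP [m _ ->] /imsetP [h _].
  move/(congr1 (fun p : {set 'I_n} * {set 'I_n} => p.1 == set0)) => /=.
  by rewrite eqxx setU1_neq0.
rewrite -/Fk big_imset /=; last first.
  move=> m1 m2 _ _ [] E _.
  have LP' := LP; case/LPP: LP' => H1 H2 _.
  have : m1 \in m2 |: pre r m2 by rewrite -E !inE eqxx.
  have : m2 \in m1 |: pre r m1 by rewrite E !inE eqxx.
  rewrite !inE => /predU1P [->//|m21] /predU1P [->//|m12].
  by have := H1 m1; rewrite (H2 _ _ _ m12 m21).
rewrite big_imset /=; last first.
  move=> h1 h2 /headsP hh1 /headsP hh2 [] E.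
  have : h1 \in h2 |: suc r h2 by rewrite -E !inE eqxx.
  by rewrite !inE => /predU1P [//|h21]; have := hh1 h2; rewrite h21.
rewrite (eq_bigr (fun m => (#|heads r| == k)%:R * a)); last by move=> m _; exact: Fk_ca.
rewrite [X in _ + X](eq_bigr (fun h => (#|heads r| == k)%:R * b)); last by move=> h hH; exact: Fk_cb.
by rewrite !sumr_const card_ord mulrDr !mulrnAr.
Qed.

End Fiber2.

Section Rec.
Variables (R : comRingType) (a b : R) (n : nat).
Local Notation mx := (@ord_max n).

Definition restr (r : {set 'I_n.+1 * 'I_n.+1}) : {set 'I_n * 'I_n} :=
  [set p | (lf p.1, lf p.2) \in r].
Definition preS (r : {set 'I_n.+1 * 'I_n.+1}) : {set 'I_n} := [set i | (lf i, mx) \in r].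
Definition sucS (r : {set 'I_n.+1 * 'I_n.+1}) : {set 'I_n} := [set i | (mx, lf i) \in r].

Definition tT := ({set 'I_n * 'I_n} * ({set 'I_n} * {set 'I_n}))%type.
Definition hh (t : tT) := ext t.1 t.2.1 t.2.2.
Definition hh' (r : {set 'I_n.+1 * 'I_n.+1}) : tT := (restr r, (preS r, sucS r)).

Lemma hh'K t : hh' (hh t) = t.
Proof.
case: t => r [P S]; rewrite /hh /hh' /=; congr (_, (_, _)); apply/setP.
- by case=> i j; rewrite inE /= extE.
- by move=> i; rewrite inE extE.
- by move=> i; rewrite inE extE.
Qed.

Lemma hhK r : is_list_partition r -> hh (hh' r) = r.
Proof.
case/LPP => H1 _ _; apply/setP => [[e f]]; rewrite /hh /hh' /=.
case: (unliftP mx e) => [e'|] ->; case: (unliftP mx f) => [f'|] ->.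
- by rewrite ext_ll inE.
- by rewrite ext_lm inE.
- by rewrite ext_ml inE.
- by rewrite ext_mm (negbTE (H1 _)).
Qed.

Definition Q k (t : tT) := is_list_partition (hh t) && (#|heads (hh t)| == k).

Lemma W_rec k : weight_sum a b n.+1 k =
  \sum_(r : {set 'I_n * 'I_n} | is_list_partition r) weight a b r *
    ((#|heads r|.+1 == k)%:R + (#|heads r| == k)%:R * (a *+ n + b *+ #|heads r|)).
Proof.
rewrite /weight_sum.
rewrite (eq_bigl (fun r : {set 'I_n.+1 * 'I_n.+1} => is_list_partition r && (#|heads r| == k))); last first.
  move=> r; rewrite inE; case LPr: (is_list_partition r) => //=.
  by rewrite blocks_heads.
rewrite (reindex_onto hh hh'); last by move=> r /andP [LPr _]; apply: hhK.
rewrite (eq_bigl (Q k)); last by move=> t; rewrite hh'K eqxx andbT.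
rewrite -[X in X = _](pair_big_dep predT (fun r ps => Q k (r, ps)) (fun r ps => weight a b (hh (r, ps)))) /=.
rewrite [RHS]big_mkcond /=; apply: eq_bigr => r _.
case LPr: (is_list_partition r); last first.
  rewrite big_pred0 // => ps; rewrite /Q /hh /=.
  case LPe: (is_list_partition _) => //=.
  by case: (ext_LP_inv LPe); rewrite LPr.
rewrite -(fiber_sum LPr a b k) big_distrr /=; apply: eq_bigr => ps _.
by rewrite /hh /= weight_ext.
Qed.

End Rec.

Section Poly.
Variables (R : comRingType) (a b : R).

Lemma W_heads n k : weight_sum a b n k =
  \sum_(r : {set 'I_n * 'I_n} | is_list_partition r && (#|heads r| == k)) weight a b r.
Proof.
apply: eq_bigl => r; rewrite inE; case LPr: (is_list_partition r) => //=.
by rewrite blocks_heads.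
Qed.

Lemma W_vanish n k : (n < k)%N -> weight_sum a b n k = 0.
Proof.
move=> nk; rewrite W_heads big_pred0 // => r.
apply/negbTE/negP => /andP [_ /eqP hk].
have := max_card (mem (heads r)); rewrite card_ord hk.
by rewrite leqNgt nk.
Qed.

Lemma W0 k : weight_sum a b 0 k = (k == 0)%:R.
Proof.
have all0 : forall r : {set 'I_0 * 'I_0}, r = set0.
  by move=> r; apply/setP => -[[i Hi] j]; exfalso; rewrite ltn0 in Hi.
rewrite W_heads.
have hd : forall r : {set 'I_0 * 'I_0}, #|heads r| = 0%N.
  by move=> r; apply/eqP; rewrite -leqn0; apply: leq_trans (max_card _) _; rewrite card_ord.
have lp : forall r : {set 'I_0 * 'I_0}, is_list_partition r.
  by move=> r; apply/LPP; split => -[].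
case: k => [|k].
  rewrite (eq_bigl (fun r => r == set0)); last by move=> r; rewrite lp hd (all0 r) !eqxx.
  by rewrite big_pred1_eq /weight big_ord0.
rewrite big_pred0 // => r; by rewrite hd andbF.
Qed.

Lemma W_S n k : weight_sum a b n.+1 k =
  (if k is k'.+1 then weight_sum a b n k' else 0) +
  (n%:R * a + k%:R * b) * weight_sum a b n k.
Proof.
rewrite W_rec.
rewrite (eq_bigr (fun r => (if #|heads r|.+1 == k then weight a b r else 0) +
   (n%:R * a + k%:R * b) * (if #|heads r| == k then weight a b r else 0))); last first.
  move=> r _; rewrite mulrDr; congr (_ + _).
    by case: (_ == k); rewrite ?mulr1 ?mulr0.
  case hk: (#|heads r| == k); last by rewrite /= mul0r !mulr0.
  by move/eqP: hk => ->; rewrite mul1r mulrC !mulr_natl.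
rewrite big_split /= -big_distrr /= -!big_mkcondr /= W_heads; congr (_ + _).
case: k => [|k]; first by rewrite big_pred0 // => r; rewrite andbF.
by rewrite W_heads; apply: eq_bigl => r; rewrite eqSS.
Qed.

Lemma fall_S k : fall_poly b k.+1 = fall_poly b k * ('X - (k%:R * b)%:P).
Proof. by rewrite /fall_poly big_ord_recr. Qed.

Lemma rise_S n : rise_poly a n.+1 = rise_poly a n * ('X + (n%:R * a)%:P).
Proof. by rewrite /rise_poly big_ord_recr. Qed.

Lemma fall_mul k n : fall_poly b k * ('X + (n%:R * a)%:P) =
  fall_poly b k.+1 + (n%:R * a + k%:R * b) *: fall_poly b k.
Proof.
rewrite fall_S -mul_polyC [_%:P * _]mulrC -mulrDr; congr (_ * _).
by rewrite polyCD addrCA subrK addrC.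
Qed.

Lemma W_gstirling n : is_gstirling a b n (fun k => weight_sum a b n k).
Proof.
rewrite /is_gstirling; elim: n => [|n IH].
  by rewrite /rise_poly big_ord0 big_ord1 W0 /fall_poly big_ord0 scale1r.
rewrite rise_S IH mulr_suml.
rewrite (eq_bigr (fun k : 'I_n.+1 => weight_sum a b n k *: fall_poly b k.+1 +
  (weight_sum a b n k * (n%:R * a + k%:R * b)) *: fall_poly b k)); last first.
  by move=> k _; rewrite -scalerAl fall_mul scalerDr scalerA.
rewrite big_split /=.
rewrite (eq_bigr (fun k : 'I_n.+2 => (if (k : nat) is k'.+1 then weight_sum a b n k' else 0) *: fall_poly b k +
  ((n%:R * a + k%:R * b) * weight_sum a b n k) *: fall_poly b k)); last first.
  by move=> k _; rewrite W_S scalerDl.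
rewrite big_split /=; congr (_ + _).
  rewrite [RHS]big_ord_recl /= scale0r add0r.
  by apply: eq_bigr => i _; rewrite /bump /= add1n.
rewrite [RHS]big_ord_recr /= W_vanish // mulr0 scale0r addr0.
by apply: eq_bigr => k _; rewrite mulrC.
Qed.

End Poly.

Section Uniq.
Variables (R : comRingType) (b : R).

Lemma fall_size k : size (fall_poly b k) = k.+1.
Proof. rewrite /fall_poly size_prod_XsubC; congr _.+1; by rewrite -[RHS](card_ord k) cardT enumT /index_enum [locked_with _ _]unlock. Qed.

Lemma fall_lead k : (fall_poly b k)`_k = 1.
Proof.
have := monic_prod_XsubC (index_enum 'I_k) xpredT (fun i : 'I_k => i%:R * b).
by rewrite monicE lead_coefE -/(fall_poly b k) fall_size => /eqP.
Qed.

Lemma fall_indep m (d : nat -> R) : \sum_(k < m) d k *: fall_poly b k = 0 ->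
  forall k, (k < m)%N -> d k = 0.
Proof.
elim: m => [|m IH] // H k km.
rewrite big_ord_recr /= in H.
have dm : d m = 0.
  have := congr1 (fun p : {poly R} => p`_m) H.
  rewrite coefD coefZ fall_lead mulr1 coef_sum big1 ?add0r ?coef0 //.
  by move=> i _; rewrite coefZ nth_default ?mulr0 // fall_size.
move: km; rewrite ltnS leq_eqVlt => /orP [/eqP -> //|km].
by apply: IH km; rewrite dm scale0r addr0 in H.
Qed.

End Uniq.

Unset Implicit Arguments. Set Strict Implicit. Set Printing Implicit Defensive.

Theorem theorem1 (R : fieldType) (alpha beta : R) (n : nat) :
  is_gstirling alpha beta n (fun k => weight_sum alpha beta n k) /\
  (forall c : nat -> R, is_gstirling alpha beta n c ->
     forall k : nat, (if (k <= n)%N then c k else 0) = weight_sum alpha beta n k).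
Proof.
split; first exact: W_gstirling.
move=> c Hc k; case: ifP => kn; last by rewrite W_vanish // ltnNge kn.
have H := W_gstirling alpha beta n; rewrite /is_gstirling Hc in H.
have := @fall_indep R beta n.+1 (fun k => c k - weight_sum alpha beta n k).
rewrite (eq_bigr (fun k : 'I_n.+1 => c k *: fall_poly beta k - weight_sum alpha beta n k *: fall_poly beta k)); last by move=> i _; rewrite scalerBl.
rewrite sumrB H subrr => /(_ erefl k); rewrite ltnS kn => /(_ isT) /eqP.
by rewrite subr_eq0 => /eqP.
Qed.
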